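(* Let $l\ge3$ and let $a,b\ge2$ be integers with $a+b=l+1$. Let $G$ be a spanning subgraph of $\widetilde O_{k+1}$ containing no cycle of length $4l+2$. If $C$ is a cycle of length $4a$ in $G$ and $C'$ is a cycle of length $4b$ in $G$ with $E(C)\cap E(C')\ne\emptyset$, then $|D(C)\cap D(C')|\ge 2$.
   Context: $\widetilde O_{k+1}=J(2k+1;k,k+1)$ is the bipartite graph with vertex set $\binom{[2k+1]}{k}\cup\binom{[2k+1]}{k+1}$, with $u,v$ adjacent iff $u\subset v$ or $v\subset u$. The direction $d(uv)$ of an edge $\{u,v\}$ is the single element of $u\,\Delta\, v$. For a subgraph $F$, $D(F)=\{d(e): e\in E(F)\}$. A spanning subgraph has the same vertex set. *)

(* Defs.v *)
From mathcomp Require Import all_boot.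
Set Implicit Arguments. Unset Strict Implicit. Unset Printing Implicit Defensive.

(* Vertices of J(2k+1;k,k+1) are subsets of [2k+1] = 'I_(2k+1). We take the
   ambient type of all subsets; the vertex set of O~_{k+1} is cut out by
   cardinality (k or k+1) inside the adjacency relation. *)
Definition vtx (k : nat) := {set 'I_(k.*2.+1)}.

Definition isV k (u : vtx k) : bool := (#|u| == k) || (#|u| == k.+1).

Definition adjO k (u v : vtx k) : bool :=
  [&& #|u| == k, #|v| == k.+1 & u \subset v] ||
  [&& #|v| == k, #|u| == k.+1 & v \subset u].

(* A spanning subgraph of O~_{k+1}: same vertex set, edge set a subset of
   E(O~_{k+1}); given as a symmetric edge relation contained in adjO. *)
Definition spanning_sub k (e : rel (vtx k)) : Prop :=
  (forall u v, e u v = e v u) /\ (forall u v, e u v -> adjO u v).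

Definition is_cycle (T : finType) (e : rel T) (c : seq T) : bool :=
  [&& 3 <= size c, uniq c & cycle e c].

Definition cedges (T : finType) (c : seq T) : {set {set T}} :=
  [set [set x; next c x] | x in c].

(* Direction set D(C): union of the symmetric differences u Δ v over edges uv
   of C (each is the singleton {d(uv)}). *)
Definition cdirs k (c : seq (vtx k)) : {set 'I_(k.*2.+1)} :=
  \bigcup_(x <- c) ((x :\: next c x) :|: (next c x :\: x)).

(* Main.v *)
Require Import Defs.
From mathcomp Require Import all_boot zify.

Lemma combine (T : eqType) (e : rel T) u v p q :
  uniq (u::v::p) -> cycle e (u::v::p) -> uniq (v::u::q) -> cycle e (v::u::q) ->
  (forall z, z \in p -> z \in q -> False) ->
  uniq (v :: p ++ u :: q) && cycle e (v :: p ++ u :: q).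
Proof.
move=> U1 C1 U2 C2 D.
apply/andP; split.
  have vu : v != u by move: U2; rewrite /= inE negb_or => /andP[/andP[]].
  move: U1 U2; rewrite /= !inE !mem_cat !inE cat_uniq /= !negb_or.
  move=> /andP[/andP[_ nup] /andP[nvp up]] /andP[/andP[_ nvq] /andP[nuq uq]].
  rewrite nvp nvq nup nuq up uq vu /= !andbT.
  by apply/negP => /hasP [z zq zp]; exact: (D z zp zq).
move: C1 C2; rewrite /= !rcons_path /= => /andP[_ /andP[pv lu]] /andP[_ /andP[H H2]].
by rewrite cat_path last_cat /= pv lu H H2.
Qed.

Lemma path_agree (T : eqType) (c : seq T) (P : T -> bool) :
  (forall y, y \in c -> P y = P (next c y)) ->
  forall s a, a \in c -> path (frel (next c)) a s -> forall z, z \in s -> P z = P a.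
Proof.
move=> St; elim=> //= z s IH a ac /andP[/eqP nz ps] w.
have zc : z \in c by rewrite -nz mem_next.
have Pz : P z = P a by rewrite -nz -St.
rewrite inE => /orP[/eqP -> //|ws]; rewrite -Pz; exact: IH zc ps w ws.
Qed.

Lemma cycle_agree (T : eqType) (c : seq T) (P : T -> bool) : uniq c ->
  (forall y, y \in c -> P y = P (next c y)) ->
  forall x y, x \in c -> y \in c -> P x = P y.
Proof.
move=> Uc St x y; have cn := cycle_next Uc.
case: c Uc St cn => // x0 s Uc St cn.
have H : forall z, z \in x0 :: s -> P z = P x0.
  move=> z; rewrite inE => /orP[/eqP -> //|zs].
  apply: (@path_agree _ _ _ St (rcons s x0) x0) => //; first by rewrite inE eqxx.
  by rewrite mem_rcons inE zs orbT.
by move=> xc yc; rewrite (H x xc) (H y yc).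
Qed.

Lemma cdirs_agree k (c : seq (vtx k)) i : uniq c -> i \notin cdirs c ->
  forall x y, x \in c -> y \in c -> (i \in x) = (i \in y).
Proof.
move=> Uc ni; apply: (@cycle_agree _ c (fun x : vtx k => i \in x) Uc) => // y yc.
apply/eqP; apply: contraR ni => ne.
rewrite /cdirs (big_rem y) //= !inE.
by move: ne; case: (i \in y); case: (i \in next c y).
Qed.

Lemma key k (C C' : seq (vtx k)) u v z : uniq C -> uniq C' ->
  u \in C -> u \in C' -> v \in C -> v \in C' -> u != v ->
  #|cdirs C :&: cdirs C'| <= 1 -> z \in C -> z \in C' -> (z == u) || (z == v).
Proof.
move=> UC UC' uC uC' vC vC' uv S1 zC zC'.
have ag : forall x y, x \in C -> x \in C' -> y \in C -> y \in C' ->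
    forall j, j \notin cdirs C :&: cdirs C' -> (j \in x) = (j \in y).
  move=> x y xC xC' yC yC' j; rewrite inE negb_and => /orP[] h.
    exact: cdirs_agree UC h x y xC yC.
  exact: cdirs_agree UC' h x y xC' yC'.
case: (pickP (fun i : 'I_(k.*2.+1) => (i \in u) != (i \in v))) => [i iuv | H]; last first.
  have uv2 : u = v by apply/setP => j; move: (H j) => /= /negbFE /eqP.
  by rewrite uv2 eqxx in uv.
have iS : i \in cdirs C :&: cdirs C'.
  apply: contraR iuv => nS; apply/eqP; exact: (ag u v uC uC' vC vC' i nS).
have onlyi : forall j, j \in cdirs C :&: cdirs C' -> j = i.
  move=> j jS; apply/eqP; apply: contraLR S1 => ji; rewrite -ltnNge.
  have sub : [set j; i] \subset cdirs C :&: cdirs C'.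
    by apply/subsetP => w; rewrite !inE => /orP[]/eqP->; rewrite -?(in_setI) //.
  by have := subset_leq_card sub; rewrite cards2 ji.
have nS : forall j, j != i -> j \notin cdirs C :&: cdirs C'.
  by move=> j ji; apply/negP => /onlyi /eqP; rewrite (negbTE ji).
case h: ((i \in z) == (i \in u)).
  apply/orP; left; apply/eqP/setP => j; case: (eqVneq j i) => [->|ji].
    exact/eqP.
  exact: ag (nS j ji).
apply/orP; right; apply/eqP/setP => j; case: (eqVneq j i) => [->|ji].
  by move: h iuv; case: (i \in z); case: (i \in u); case: (i \in v).
exact: ag (nS j ji).
Qed.

Lemma size_comb (T : Type) (v x : T) (p q : seq T) a b l : 1 < a -> 1 < b -> a + b = l.+1 ->
  (size p).+1 = (4*a).-1 -> (size q).+1 = (4*b).-1 ->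
  size (v :: p ++ x :: q) = 4*l+2 /\ 2 < size (v :: p ++ x :: q).
Proof. move=> ha hb hab ss st; rewrite /= size_cat /=; split; lia. Qed.

Theorem lemma5p4 (k l a b : nat) (e : rel (vtx k)) :
  3 <= l -> 2 <= a -> 2 <= b -> a + b = l.+1 ->
  spanning_sub e ->
  ~ (exists c : seq (vtx k), is_cycle e c /\ size c = 4 * l + 2) ->
  forall C C' : seq (vtx k),
    is_cycle e C -> size C = 4 * a ->
    is_cycle e C' -> size C' = 4 * b ->
    cedges C :&: cedges C' != set0 ->
    2 <= #|cdirs C :&: cdirs C'|.
Proof.
move=> hl ha hb hab [esym eadj] Nc C C' /and3P[s3 UC cC] sC /and3P[s3' UC' cC'] sC'.
move=> /set0Pn [E /setIP [/imsetP [x xC ->] /imsetP [y yC' Exy]]].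
rewrite leqNgt; apply/negP => S1; apply: Nc.
set v := next C x.
have exv : e x v := next_cycle cC xC.
have xv : x != v.
  apply/negP => /eqP hh; move: (eadj _ _ exv); rewrite /adjO -hh.
  by case/orP => /and3P[/eqP h1 /eqP h2 _]; lia.
have vC : v \in C by rewrite mem_next.
have xC' : x \in C'.
  have : x \in [set y; next C' y] by rewrite -Exy set21.
  by rewrite !inE => /orP[/eqP->|/eqP->] //; rewrite mem_next.
have vC' : v \in C'.
  have : v \in [set y; next C' y] by rewrite -Exy set22.
  by rewrite !inE => /orP[/eqP->|/eqP->] //; rewrite mem_next.
have K := fun z => @key k C C' x v z UC UC' xC xC' vC vC' xv S1.
case: (rot_to xC) => i s Hr.
have ss : size s = (4 * a).-1 by rewrite -sC -(size_rot i C) Hr.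
case: s Hr ss => [|w p] Hr /= ss; try lia.
have wv : w = v.
  by have := next_rot i UC x; rewrite Hr /next /= eqxx.
subst w.
have U1 : uniq [:: x, v & p] by rewrite -Hr rot_uniq.
have C1 : cycle e [:: x, v & p] by rewrite -Hr rot_cycle.
have M1 : forall z, z \in p -> z \in C by move=> z zp; rewrite -(mem_rot i) Hr !inE zp !orbT.
have nxp : x \notin p by move: U1; rewrite /= inE negb_or => /andP[/andP[]].
have nvp : v \notin p by move: U1; rewrite /= => /and3P[_ ].
case: (rot_to yC') => j t Hr'.
have st : size t = (4 * b).-1 by rewrite -sC' -(size_rot j C') Hr'.
case: t Hr' st => [|w q] Hr' /= st; try (clear -st hb; lia).
have wn : next C' y = w.
  by have := next_rot j UC' y; rewrite Hr' /next /= eqxx.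
rewrite wn in Exy.
have U2 : uniq [:: y, w & q] by rewrite -Hr' rot_uniq.
have C2 : cycle e [:: y, w & q] by rewrite -Hr' rot_cycle.
have M2 : forall z, z \in q -> z \in C' by move=> z zp; rewrite -(mem_rot j) Hr' !inE zp !orbT.
have D : forall z, z \in p -> z \in q -> False.
  move=> z zp zq; case/orP: (K z (M1 z zp) (M2 z zq)) => /eqP hz; rewrite hz in zp.
    by rewrite zp in nxp.
  by rewrite zp in nvp.
have yw : y != w by move: U2; rewrite /= inE negb_or => /andP[/andP[]].
have yI : y \in [set x; v] by rewrite Exy set21.
have wI : w \in [set x; v] by rewrite Exy set22.
move: yI wI; rewrite !inE => /orP[]/eqP ey /orP[]/eqP ew; rewrite ey ew in yw U2 C2; try by rewrite eqxx in yw.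
- have sym : (fun z => e^~ z) =2 e by move=> u0 w0; rewrite esym.
  have E2 : [:: v, x & rev q] = rot (size (rev q)) (rev [:: x, v & q]).
    by rewrite rev_cons rev_cons -!cats1 -catA rot_size_cat.
  have U3 : uniq [:: v, x & rev q] by rewrite E2 rot_uniq rev_uniq.
  have C3 : cycle e [:: v, x & rev q].
    by rewrite E2 rot_cycle rev_cycle (eq_cycle sym).
  have st' : (size (rev q)).+1 = (4*b).-1 by rewrite size_rev.
  have [Hs1 Hs2] := @size_comb _ v x _ _ a b l ha hb hab ss st'.
  exists (v :: p ++ x :: rev q); split => //.
  have D' : forall z, z \in p -> z \in rev q -> False by move=> z zp; rewrite mem_rev; exact: D.
  rewrite /is_cycle; have /andP[-> ->] := @combine _ e x v p (rev q) U1 C1 U3 C3 D'.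
  by rewrite Hs2.
- have [Hs1 Hs2] := @size_comb _ v x _ _ a b l ha hb hab ss st.
  exists (v :: p ++ x :: q); split => //.
  rewrite /is_cycle; have /andP[-> ->] := @combine _ e x v p q U1 C1 U2 C2 D.
  by rewrite Hs2.
Qed.
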